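(* Let $\mathcal{C}$ be a Conway category and let $\mathbf{Q}$ be a finite automaton. If $\mathcal{C}$ satisfies the identity $\Gamma(\mathbf{Q})$ associated with $\mathbf{Q}$, then $\mathcal{C}$ satisfies the group identity $\Gamma(G)$ for every finite simple group $G$ that divides the monoid $M(\mathbf{Q})$.
   Context: Cartesian categories have chosen finite products (terminal object $T$, projections $\pi_i$, tupling $\langle\cdot\rangle$, $!_A:A\to T$, $f\times g$), strictly associative; composition is written $g\circ f$; $\Delta_{A^n}=\langle 1_A,\ldots,1_A\rangle:A\to A^n$. A dagger operation maps $f:A\times C\to A$ to $f^\dagger:C\to A$. A Conway category is a cartesian category with dagger satisfying: $(f\circ(1_A\times g))^\dagger=f^\dagger\circ g$ ($f:A\times B\to A$, $g:C\to B$); $f^{\dagger\dagger}=(f\circ(\Delta_{A^2}\times 1_C))^\dagger$ ($f:A\times A\times C\to A$); $(f\circ\langle g,\pi_2^{A\times C}\rangle)^\dagger=f\circ\langle (g\circ\langle f,\pi_2^{B\times C}\rangle)^\dagger,1_C\rangle$ ($f:B\times C\to A$, $g:A\times C\to B$). A finite automaton $\mathbf{Q}=(Q,Z,\cdot)$ has finite nonempty state set $Q$, finite nonempty input alphabet $Z$ and action $Q\times Z\to Q$, extended to words; $M(\mathbf{Q})$ is the monoid of functions $Q\to Q$, $q\mapsto qu$, induced by words $u\in Z^*$. Write $Q=\{q_1,\ldots,q_n\}$, identified with $\{1,\ldots,n\}$, and $Z=\{a_1,\ldots,a_m\}$. For an object $A$ and $i\in[n]$ let $\rho_i^{\mathbf{Q},A}=\langle\pi^{A^n}_{ia_1},\ldots,\pi^{A^n}_{ia_m}\rangle:A^n\to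 A^m$ (here $ia_j$ is the index of the state $q_i\cdot a_j$). For $f:A^m\times C\to A$ let $f^{\mathbf{Q},A}:A^n\times C\to A^n$ be the morphism with $\pi_i^{A^n}\circ f^{\mathbf{Q},A}=f\circ(\rho_i^{\mathbf{Q},A}\times 1_C)$ for all $i$. The identity $\Gamma(\mathbf{Q})$ holds in $\mathcal{C}$ if $(f^{\mathbf{Q},A})^\dagger=\Delta_{A^n}\circ(f\circ(\Delta_{A^m}\times 1_C))^\dagger$ for all objects $A,C$ and all $f:A^m\times C\to A$. For a finite group (or monoid) $G$, $\Gamma(G)$ is the identity $\Gamma$ of the automaton $(G,G,\cdot)$ whose action is multiplication. A group in a finite monoid $M$ is a subsemigroup of $M$ which is a group (its unit may be any idempotent); a finite group $G$ divides $M$ if it is a homomorphic image of a group in $M$. A finite group is simple if it is nontrivial and has no normal subgroups other than itself and the trivial one. *)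

(* Defs.v *)
From mathcomp Require Import all_boot all_fingroup all_solvable.
Set Implicit Arguments.
Unset Strict Implicit.
Unset Printing Implicit Defensive.

(* Hom-sets are types, equality of morphisms is Leibniz equality.      *)
(* Binary products are not strictly associative; iterated products are *)
(* always right-nested: A x B x C := A x (B x C).      *)
Record CartCat := {
  obj :> Type;
  hom : obj -> obj -> Type;
  idm : forall A, hom A A;
  comp : forall A B C, hom B C -> hom A B -> hom A C;
  term : obj;
  bang : forall A, hom A term;
  prod : obj -> obj -> obj;
  p1 : forall A B, hom (prod A B) A;
  p2 : forall A B, hom (prod A B) B;
  pair : forall A B X, hom X A -> hom X B -> hom X (prod A B);
  compA : forall A B C D (h : hom C D) (g : hom B C) (f : hom A B),
      comp h (comp g f) = comp (comp h g) f;
  comp1m : forall A B (f : hom A B), comp (idm B) f = f;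
  compm1 : forall A B (f : hom A B), comp f (idm A) = f;
  bang_uniq : forall A (f : hom A term), f = bang A;
  p1_pair : forall A B X (f : hom X A) (g : hom X B), comp (p1 A B) (pair f g) = f;
  p2_pair : forall A B X (f : hom X A) (g : hom X B), comp (p2 A B) (pair f g) = g;
  pair_uniq : forall A B X (h : hom X (prod A B)),
      pair (comp (p1 A B) h) (comp (p2 A B) h) = h
}.

Arguments hom {c} _ _.
Arguments idm {c} A.
Arguments comp {c A B C} _ _.
Arguments term {c}.
Arguments bang {c} A.
Arguments prod {c} _ _.
Arguments p1 {c} A B.
Arguments p2 {c} A B.
Arguments pair {c A B X} _ _.

Lemma ord_0_False : 'I_0 -> False.
Proof. by case. Qed.

Section CartOps.
Variable K : CartCat.

Definition pmap (A B A' B' : K) (f : hom A A') (g : hom B B') :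
    hom (prod A B) (prod A' B') :=
  pair (comp f (p1 A B)) (comp g (p2 A B)).

Variable A : K.

Fixpoint pow (n : nat) : K :=
  match n with
  | 0 => term
  | S k => match k with 0 => A | S _ => prod A (pow k) end
  end.

Fixpoint projn (n : nat) : 'I_n -> hom (pow n) A :=
  match n return 'I_n -> hom (pow n) A with
  | 0 => fun i => False_rect _ (ord_0_False i)
  | S k => fun i =>
     (match k as k0 return ('I_k0 -> hom (pow k0) A) -> 'I_k0.+1 -> hom (pow k0.+1) A with
      | 0 => fun _ _ => idm A
      | S j => fun r i =>
          match unlift ord0 i with
          | None => p1 A (pow j.+1)
          | Some i' => comp (r i') (p2 A (pow j.+1))
          end
      end) (@projn k) i
  end.

Fixpoint tuplen (X : K) (n : nat) : ('I_n -> hom X A) -> hom X (pow n) :=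
  match n return ('I_n -> hom X A) -> hom X (pow n) with
  | 0 => fun _ => bang X
  | S k => fun fs =>
     (match k as k0 return (('I_k0 -> hom X A) -> hom X (pow k0)) ->
                           ('I_k0.+1 -> hom X A) -> hom X (pow k0.+1) with
      | 0 => fun _ fs => fs ord0
      | S j => fun r fs => pair (fs ord0) (r (fun i => fs (lift ord0 i)))
      end) (@tuplen X k) fs
  end.

Definition diag (n : nat) : hom A (pow n) := @tuplen A n (fun _ => idm A).

End CartOps.

Record ConwayCat := {
  ccat :> CartCat;
  dagger : forall (A C : ccat), hom (prod A C) A -> hom C A;
  dagger_param : forall (A B C : ccat) (f : hom (prod A B) A) (g : hom C B),
      dagger (comp f (pmap (idm A) g)) = comp (dagger f) g;
  (* double dagger identity; A x A x C = A x (A x C),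
     Delta_{A^2} x 1_C becomes <pi_1, <pi_1, pi_2>> : A x C -> A x (A x C) *)
  dagger_double : forall (A C : ccat) (f : hom (prod A (prod A C)) A),
      dagger (dagger f) =
      dagger (comp f (pair (p1 A C) (pair (p1 A C) (p2 A C))));
  dagger_comp : forall (A B C : ccat) (f : hom (prod B C) A) (g : hom (prod A C) B),
      dagger (comp f (pair g (p2 A C))) =
      comp f (pair (dagger (comp g (pair f (p2 B C)))) (idm C))
}.

Arguments dagger {c A C} _.

Record automaton := Automaton {
  state : finType;
  input : finType;
  act : state -> input -> state
}.

(* the identity Gamma(Q); states q_1..q_n and inputs a_1..a_m are
   enumerated by the canonical enumerations of the finite types *)
Section Gamma.
Variables (K : ConwayCat) (Q : automaton).

Definition nQ := #|state Q|.
Definition mQ := #|input Q|.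

Definition st_of (i : 'I_nQ) : state Q := enum_val i.
Definition in_of (j : 'I_mQ) : input Q := enum_val j.
Definition st_idx (q : state Q) : 'I_nQ := enum_rank q.

Definition rho (A : K) (i : 'I_nQ) : hom (pow A nQ) (pow A mQ) :=
  @tuplen K A (pow A nQ) mQ
    (fun j : 'I_mQ => @projn K A nQ (st_idx (act (st_of i) (in_of j)))).

Definition fQ (A C : K) (f : hom (prod (pow A mQ) C) A) :
    hom (prod (pow A nQ) C) (pow A nQ) :=
  @tuplen K A (prod (pow A nQ) C) nQ (fun i : 'I_nQ => comp f (pmap (rho A i) (idm C))).

Definition Gamma : Prop :=
  forall (A C : K) (f : hom (prod (pow A mQ) C) A),
    dagger (fQ f) = comp (@diag K A nQ) (dagger (comp f (pmap (@diag K A mQ) (idm C)))).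
End Gamma.

Section Monoid.
Variable Q : automaton.

Definition word_fun (u : seq (input Q)) : {ffun state Q -> state Q} :=
  [ffun q => foldl (@act Q) q u].

Definition inM (f : {ffun state Q -> state Q}) : Prop :=
  exists u : seq (input Q), f = word_fun u.

(* product in M(Q): f_u * f_v = f_{uv}, i.e. first f then g *)
Definition mulT (f g : {ffun state Q -> state Q}) : {ffun state Q -> state Q} :=
  [ffun q => g (f q)].

Definition group_in_M (H : {set {ffun state Q -> state Q}})
    (e : {ffun state Q -> state Q}) : Prop :=
  [/\ forall x, x \in H -> inM x,
      e \in H,
      forall x y, x \in H -> y \in H -> mulT x y \in H,
      forall x, x \in H -> mulT e x = x /\ mulT x e = x
    & forall x, x \in H -> exists2 y, y \in H & mulT x y = e /\ mulT y x = e].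

Definition divides_M (G : finGroupType) : Prop :=
  exists (H : {set {ffun state Q -> state Q}}) (e : {ffun state Q -> state Q})
         (phi : {ffun state Q -> state Q} -> G),
    [/\ group_in_M H e,
        forall x y, x \in H -> y \in H -> phi (mulT x y) = (phi x * phi y)%g
      & forall g : G, exists2 x, x \in H & phi x = g].
End Monoid.

Definition group_automaton (G : finGroupType) : automaton :=
  @Automaton G G (fun x y => (x * y)%g).

(* Main.v *)
From Pilot Require Import Defs.
From mathcomp Require Import all_boot all_fingroup all_solvable.
Import Pilot.Defs.
Set Implicit Arguments.
Unset Strict Implicit.
Unset Printing Implicit Defensive.

Section Cat.
Variable K : CartCat.
Local Notation "f ⊙ g" := (comp f g) (at level 40, left associativity).

Lemma pair_comp (A B X Y : K) (f : hom X A) (g : hom X B) (h : hom Y X) :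
  pair f g ⊙ h = pair (f ⊙ h) (g ⊙ h).
Proof.
by rewrite -{1}(pair_uniq (pair f g ⊙ h)) !compA p1_pair p2_pair.
Qed.

Lemma pair_ext (A B X : K) (h h' : hom X (prod A B)) :
  p1 A B ⊙ h = p1 A B ⊙ h' -> p2 A B ⊙ h = p2 A B ⊙ h' -> h = h'.
Proof. by move=> e1 e2; rewrite -(pair_uniq h) -(pair_uniq h') e1 e2. Qed.

Lemma pair_p1p2 (A B : K) : pair (p1 A B) (p2 A B) = idm (prod A B).
Proof. by apply: pair_ext; rewrite ?p1_pair ?p2_pair compm1. Qed.

Lemma pmapE (A B A' B' : K) (f : hom A A') (g : hom B B') :
  pmap f g = pair (f ⊙ p1 A B) (g ⊙ p2 A B).
Proof. by []. Qed.

Lemma p1_pmap (A B A' B' : K) (f : hom A A') (g : hom B B') :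
  p1 A' B' ⊙ pmap f g = f ⊙ p1 A B.
Proof. by rewrite /pmap p1_pair. Qed.

Lemma p2_pmap (A B A' B' : K) (f : hom A A') (g : hom B B') :
  p2 A' B' ⊙ pmap f g = g ⊙ p2 A B.
Proof. by rewrite /pmap p2_pair. Qed.

Lemma pmap_pair (A B A' B' X : K) (f : hom A A') (g : hom B B') (h : hom X A) (k : hom X B) :
  pmap f g ⊙ pair h k = pair (f ⊙ h) (g ⊙ k).
Proof. by rewrite /pmap pair_comp -!compA p1_pair p2_pair. Qed.

Lemma pmap_comp (A B A' B' A'' B'' : K) (f : hom A A') (g : hom B B') (f' : hom A' A'') (g' : hom B' B'') :
  pmap f' g' ⊙ pmap f g = pmap (f' ⊙ f) (g' ⊙ g).
Proof. by rewrite {1}/pmap pmap_pair !compA. Qed.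

Lemma pmap11 (A B : K) : pmap (idm A) (idm B) = idm (prod A B).
Proof. by rewrite /pmap !comp1m pair_p1p2. Qed.


Section Pow.
Variable A : K.

Lemma projn_tuplen (X : K) (n : nat) (fs : 'I_n -> hom X A) (i : 'I_n) :
  projn A i ⊙ tuplen fs = fs i.
Proof.
elim: n fs i => [|[|k] IH] fs i; first by case: i.
  by rewrite /= comp1m; congr fs; apply/val_inj; case: i => [[]].
rewrite /=; case: unliftP => [j ->|->].
  by rewrite -compA p2_pair IH.
by rewrite p1_pair.
Qed.

Lemma tuplen_ext (X : K) (n : nat) (h h' : hom X (pow A n)) :
  (forall i, projn A i ⊙ h = projn A i ⊙ h') -> h = h'.
Proof.
elim: n h h' => [|[|k] IH] h h' E.
- by rewrite (bang_uniq h) (bang_uniq h').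
- by have := E ord0; rewrite /= !comp1m.
- apply: pair_ext.
    by have := E ord0; rewrite /= unlift_none.
  apply: IH => j; have := E (lift ord0 j); rewrite /= liftK -!compA //.
Qed.

End Pow.

Definition prj (A : K) (V : finType) (v : V) : hom (pow A #|V|) A := projn A (enum_rank v).
Definition tup (A X : K) (V : finType) (F : V -> hom X A) : hom X (pow A #|V|) :=
  tuplen (fun i => F (enum_val i)).

Lemma prj_tup (A X : K) (V : finType) (F : V -> hom X A) (v : V) :
  prj A v ⊙ tup F = F v.
Proof. by rewrite /prj /tup projn_tuplen enum_rankK. Qed.

Lemma tup_ext (A X : K) (V : finType) (h h' : hom X (pow A #|V|)) :
  (forall v : V, prj A v ⊙ h = prj A v ⊙ h') -> h = h'.
Proof. by move=> E; apply: tuplen_ext => i; have := E (enum_val i); rewrite /prj enum_valK. Qed.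

Lemma tup_comp (A X Y : K) (V : finType) (F : V -> hom X A) (h : hom Y X) :
  tup F ⊙ h = tup (fun v => F v ⊙ h).
Proof. by apply: tup_ext => v; rewrite compA !prj_tup. Qed.

Lemma tup_eta (A X : K) (V : finType) (h : hom X (pow A #|V|)) :
  tup (fun v => prj A v ⊙ h) = h.
Proof. by apply: tup_ext => v; rewrite prj_tup. Qed.

Lemma tup_eq (A X : K) (V : finType) (F G : V -> hom X A) :
  (forall v, F v = G v) -> tup F = tup G.
Proof. by move=> E; apply: tup_ext => v; rewrite !prj_tup. Qed.

Lemma diag_tup (A : K) (V : finType) : diag A #|V| = tup (fun _ : V => idm A).
Proof. by []. Qed.

Lemma prj_diag (A : K) (V : finType) (v : V) : prj A v ⊙ diag A #|V| = idm A.
Proof. by rewrite diag_tup prj_tup. Qed.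

End Cat.

Ltac simp := rewrite ?pmapE; repeat progress (rewrite ?pair_comp -?compA ?p1_pair ?p2_pair ?comp1m ?compm1 ?pair_uniq ?pair_p1p2).

Section Conway.
Variable K : ConwayCat.
Local Notation "f ⊙ g" := (@comp (ccat K) _ _ _ f g) (at level 40, left associativity).

Lemma fixpt (A C : K) (f : hom (prod A C) A) :
  dagger f = f ⊙ pair (dagger f) (idm C).
Proof.
by have := dagger_comp f (p1 A C); rewrite pair_p1p2 compm1 p1_pair.
Qed.

Lemma fixpt_comp (A C X : K) (f : hom (prod A C) A) (h : hom X C) :
  f ⊙ pair (dagger f ⊙ h) h = dagger f ⊙ h.
Proof. by rewrite [in RHS]fixpt -compA pair_comp comp1m. Qed.

Lemma dagger_const (A C : K) (g : hom C A) : dagger (g ⊙ p2 A C) = g.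
Proof.
have := dagger_comp (g ⊙ p2 A C) (p1 A C).
by rewrite pair_p1p2 compm1 => ->; rewrite -compA p2_pair compm1.
Qed.

Lemma dagger_retract (X Y C : K) (s : hom X Y) (t : hom Y X) (F : hom (prod Y C) Y) :
  s ⊙ t = idm Y -> dagger (t ⊙ F ⊙ pmap s (idm C)) = t ⊙ dagger F.
Proof.
move=> st.
have := dagger_comp (t ⊙ F) (s ⊙ p1 X C).
have -> : t ⊙ F ⊙ pair (s ⊙ p1 X C) (p2 X C) = t ⊙ F ⊙ pmap s (idm C).
  by rewrite pmapE comp1m.
move=> ->.
rewrite -[s ⊙ p1 X C ⊙ _]compA p1_pair compA st comp1m.
by rewrite -compA -fixpt.
Qed.

Lemma dagger_param' (A B C : K) (f : hom (prod A B) A) (g : hom C B) :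
  dagger (f ⊙ pmap (idm A) g) = dagger f ⊙ g.
Proof. exact: dagger_param. Qed.

Lemma dagger_indep (X Y C : K) (f : hom (prod X C) X) (g : hom (prod Y C) Y) :
  dagger (pair (f ⊙ pmap (p1 X Y) (idm C)) (g ⊙ pmap (p2 X Y) (idm C))) =
  pair (dagger f) (dagger g).
Proof.
set C' := prod (prod X Y) C.
pose Psi : hom (prod (prod X Y) C') (prod X Y) :=
  pair (f ⊙ pair (p1 X Y ⊙ p1 _ _) (p2 _ C ⊙ p2 _ _))
       (g ⊙ pair (p2 X Y ⊙ p1 _ C ⊙ p2 _ C') (p2 _ C ⊙ p2 _ _)).
have E1 : Psi ⊙ pair (p1 _ C) (pair (p1 _ C) (p2 _ C)) =
          pair (f ⊙ pmap (p1 X Y) (idm C)) (g ⊙ pmap (p2 X Y) (idm C)).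
  by rewrite /Psi; simp.
rewrite -E1 -dagger_double.
pose f0 : hom (prod X C') (prod X Y) :=
  pair (f ⊙ pair (p1 X C') (p2 _ C ⊙ p2 _ _))
       (g ⊙ pair (p2 X Y ⊙ p1 _ C ⊙ p2 X C') (p2 _ C ⊙ p2 _ _)).
have E2 : f0 ⊙ pair (p1 X Y ⊙ p1 _ C') (p2 _ C') = Psi by rewrite /f0 /Psi; simp.
have := dagger_comp f0 (p1 X Y ⊙ p1 _ C'); rewrite E2 => ->.
have E3 : p1 X Y ⊙ p1 (prod X Y) C' ⊙ pair f0 (p2 X C') = f ⊙ pmap (idm X) (p2 _ C).
  by rewrite /f0; simp.
rewrite E3 dagger_param' /f0.
pose f1 : hom (prod Y C) (prod X Y) := pair (dagger f ⊙ p2 Y C) (p1 Y C).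
have E4 : pair (f ⊙ pair (p1 X C') (p2 (prod X Y) C ⊙ p2 X C'))
         (g ⊙ pair (p2 X Y ⊙ p1 (prod X Y) C ⊙ p2 X C') (p2 (prod X Y) C ⊙ p2 X C'))
         ⊙ pair (dagger f ⊙ p2 (prod X Y) C) (idm C')
       = f1 ⊙ pair (g ⊙ pmap (p2 X Y) (idm C)) (p2 _ C).
  by rewrite /f1; simp; rewrite fixpt_comp.
rewrite E4 dagger_comp /f1.
have E5 : g ⊙ pmap (p2 X Y) (idm C) ⊙ pair (pair (dagger f ⊙ p2 Y C) (p1 Y C)) (p2 Y C) = g.
  by simp.
by rewrite E5; simp.
Qed.


Lemma dagger_cross (X Y C : K) (u : hom (prod Y C) X) (v : hom (prod X C) Y) :
  dagger (pair (u ⊙ pmap (p2 X Y) (idm C)) (v ⊙ pmap (p1 X Y) (idm C))) =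
  pair (u ⊙ pair (dagger (v ⊙ pair u (p2 Y C))) (idm C)) (dagger (v ⊙ pair u (p2 Y C))).
Proof.
set C' := prod (prod X Y) C.
pose chi : hom (prod (prod X Y) C') (prod X Y) :=
  pair (u ⊙ pair (p2 X Y ⊙ p1 _ C ⊙ p2 _ C') (p2 _ C ⊙ p2 _ C'))
       (v ⊙ pair (p1 X Y ⊙ p1 _ C') (p2 _ C ⊙ p2 _ C')).
have E1 : chi ⊙ pair (p1 _ C) (pair (p1 _ C) (p2 _ C)) =
          pair (u ⊙ pmap (p2 X Y) (idm C)) (v ⊙ pmap (p1 X Y) (idm C)).
  by rewrite /chi; simp.
rewrite -E1 -dagger_double.
pose f0 : hom (prod X C') (prod X Y) :=
  pair (u ⊙ pair (p2 X Y ⊙ p1 _ C ⊙ p2 X C') (p2 _ C ⊙ p2 X C'))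
       (v ⊙ pair (p1 X C') (p2 _ C ⊙ p2 X C')).
have E2 : f0 ⊙ pair (p1 X Y ⊙ p1 _ C') (p2 _ C') = chi by rewrite /f0 /chi; simp.
have := dagger_comp f0 (p1 X Y ⊙ p1 _ C'); rewrite E2 => ->.
have E3 : p1 X Y ⊙ p1 (prod X Y) C' ⊙ pair f0 (p2 X C') = (u ⊙ pmap (p2 X Y) (idm C)) ⊙ p2 X C'.
  by rewrite /f0; simp.
rewrite E3 dagger_const.
pose k := v ⊙ pair u (p2 Y C).
pose f1 : hom (prod Y C) (prod X Y) := pair u k.
have E4 : f0 ⊙ pair (u ⊙ pmap (p2 X Y) (idm C)) (idm C') = f1 ⊙ pair (p2 X Y ⊙ p1 _ C) (p2 _ C).
  by rewrite /f0 /f1 /k; simp.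
rewrite E4 dagger_comp.
have E5 : p2 X Y ⊙ p1 (prod X Y) C ⊙ pair f1 (p2 Y C) = k by rewrite /f1; simp.
rewrite E5 /f1 pair_comp; congr pair.
by rewrite -fixpt.
Qed.

Definition alphaY (X Y C : K) : hom (prod Y (prod X C)) (prod (prod X Y) C) :=
  pair (pair (p1 X C ⊙ p2 Y _) (p1 Y _)) (p2 X C ⊙ p2 Y _).
Definition alphaX (X Y C : K) : hom (prod X (prod Y C)) (prod (prod X Y) C) :=
  pair (pair (p1 X _) (p1 Y C ⊙ p2 X _)) (p2 Y C ⊙ p2 X _).

Lemma bekic (X Y C : K) (Phi : hom (prod (prod X Y) C) (prod X Y)) :
  let GY := dagger (p2 X Y ⊙ Phi ⊙ alphaY X Y C) in
  let a := dagger (p1 X Y ⊙ Phi ⊙ pair (pair (p1 X C) GY) (p2 X C)) in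
  dagger Phi = pair a (GY ⊙ pair a (idm C)).
Proof.
move=> GY a.
set f := p1 X Y ⊙ Phi; set g := p2 X Y ⊙ Phi.
set FX := dagger (f ⊙ alphaX X Y C).
set C' := prod (prod X Y) C.
pose Psi : hom (prod (prod X Y) C') (prod X Y) :=
  pair (f ⊙ pair (pair (p1 X Y ⊙ p1 _ C') (p2 X Y ⊙ p1 _ C ⊙ p2 _ C')) (p2 _ C ⊙ p2 _ C'))
       (g ⊙ pair (pair (p1 X Y ⊙ p1 _ C ⊙ p2 _ C') (p2 X Y ⊙ p1 _ C')) (p2 _ C ⊙ p2 _ C')).
have E1 : Psi ⊙ pair (p1 _ C) (pair (p1 _ C) (p2 _ C)) = Phi.
  by rewrite /Psi /f /g; simp.
rewrite -E1 -dagger_double.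
have E2 : Psi = pair ((f ⊙ alphaX X Y C ⊙ pmap (idm X) (pmap (p2 X Y) (idm C))) ⊙ pmap (p1 X Y) (idm C'))
                     ((g ⊙ alphaY X Y C ⊙ pmap (idm Y) (pmap (p1 X Y) (idm C))) ⊙ pmap (p2 X Y) (idm C')).
  by rewrite /Psi /alphaX /alphaY; simp.
rewrite E2 dagger_indep !dagger_param' -/FX -/GY dagger_cross.
set b := dagger (GY ⊙ pair FX (p2 Y C)).
have Ea : a = FX ⊙ pair b (idm C).
  pose phi := f ⊙ alphaX X Y C ⊙ pmap (idm X) (pair GY (p2 X C)).
  have Ep : dagger phi = FX ⊙ pair GY (p2 X C) by rewrite /phi dagger_param'.
  have := dagger_double phi; rewrite Ep.
  have -> : phi ⊙ pair (p1 X C) (pair (p1 X C) (p2 X C)) =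
            p1 X Y ⊙ Phi ⊙ pair (pair (p1 X C) GY) (p2 X C).
    by rewrite /phi /f /alphaX; simp.
  by rewrite -/a dagger_comp => <-.
rewrite Ea; congr pair.
by rewrite {1}/b fixpt -/b; simp.
Qed.

End Conway.

Section Systems.
Variable K : ConwayCat.
Local Notation "f ⊙ g" := (@comp (ccat K) _ _ _ f g) (at level 40, left associativity).

Lemma bekic' (X Y C : K) (Phi : hom (prod (prod X Y) C) (prod X Y)) :
  dagger Phi =
  pair (dagger (p1 X Y ⊙ Phi ⊙ pair (pair (p1 X C) (dagger (p2 X Y ⊙ Phi ⊙ alphaY X Y C))) (p2 X C)))
       (dagger (p2 X Y ⊙ Phi ⊙ alphaY X Y C) ⊙
          pair (dagger (p1 X Y ⊙ Phi ⊙ pair (pair (p1 X C) (dagger (p2 X Y ⊙ Phi ⊙ alphaY X Y C))) (p2 X C))) (idm C)).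
Proof. exact: (bekic Phi). Qed.

Fixpoint iterh (A P : K) (h : hom (prod A P) A) (j : nat) : hom (prod A P) A :=
  match j with 0 => p1 A P | j'.+1 => h ⊙ pair (iterh h j') (p2 A P) end.

Lemma nilp (A P : K) (V : finType) (h : hom (prod (pow A #|V|) P) (pow A #|V|))
  (depth : V -> nat) (E : V -> hom P A) :
  (forall v (k : hom (prod (pow A #|V|) P) (pow A #|V|)),
     (forall v', depth v' < depth v -> prj A v' ⊙ k = E v' ⊙ p2 _ P) ->
     prj A v ⊙ (h ⊙ pair k (p2 _ P)) = E v ⊙ p2 _ P) ->
  dagger h = tup E.
Proof.
move=> H.
have I1 j : iterh h j ⊙ pair (dagger h) (idm P) = dagger h.
  elim: j => [|j IH] /=; first by rewrite p1_pair.
  by rewrite -compA pair_comp IH p2_pair -fixpt.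
have I2 j : forall v, depth v < j -> prj A v ⊙ iterh h j = E v ⊙ p2 _ P.
  elim: j => [//|j IH] v Hv /=.
  apply: H => v' Hv'; apply: IH; exact: leq_trans Hv' Hv.
have E3 : iterh h (\max_v depth v).+1 = tup E ⊙ p2 _ P.
  apply: tup_ext => v; rewrite I2; first by rewrite compA prj_tup.
  by rewrite ltnS (leq_bigmax v).
by rewrite -(I1 (\max_v depth v).+1) E3 -compA p2_pair compm1.
Qed.

Definition rix (A : K) (U V : finType) (f : U -> V) : hom (pow A #|V|) (pow A #|U|) :=
  tup (fun u => prj A (f u)).

Lemma prj_rix (A : K) (U V : finType) (f : U -> V) (u : U) :
  prj A u ⊙ rix A f = prj A (f u).
Proof. by rewrite prj_tup. Qed.

Section Split.
Variables (A : K) (U V : finType) (i : U -> V).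

Definition pk (v : V) := [pick u | i u == v].

Definition sig_s : hom (prod (pow A #|U|) (pow A #|V|)) (pow A #|V|) :=
  tup (fun v => match pk v with Some u => prj A u ⊙ p1 _ _ | None => prj A v ⊙ p2 _ _ end).

Definition tau_s : hom (pow A #|V|) (prod (pow A #|U|) (pow A #|V|)) :=
  pair (rix A i) (idm _).

Lemma sig_tau : sig_s ⊙ tau_s = idm _.
Proof.
apply: tup_ext => v; rewrite compA prj_tup compm1.
rewrite /pk; case: pickP => [u /eqP <-|_]; rewrite -compA ?p1_pair ?p2_pair ?compm1 //.
by rewrite prj_rix.
Qed.

End Split.

Lemma closed_sub (A C : K) (U V : finType) (i : U -> V) (inj : injective i)
  (S : hom (prod (pow A #|V|) C) (pow A #|V|)) (S' : hom (prod (pow A #|U|) C) (pow A #|U|)) :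
  rix A i ⊙ S = S' ⊙ pmap (rix A i) (idm C) -> rix A i ⊙ dagger S = dagger S'.
Proof.
move=> HS.
have ET := @dagger_retract K _ _ C _ _ S (sig_tau A i).
have -> : rix A i ⊙ dagger S = p1 _ _ ⊙ (tau_s A i ⊙ dagger S) by rewrite compA p1_pair.
rewrite -ET bekic' p1_pair.
have Er : rix A i ⊙ sig_s A i = p1 _ _.
  apply: tup_ext => u; rewrite compA prj_rix prj_tup.
  rewrite /pk; case: pickP => [u' /eqP /inj -> //|/(_ u)]; by rewrite eqxx.
congr dagger.
rewrite /tau_s; simp. rewrite compA HS; simp. rewrite compA Er; simp. done.
Qed.


Lemma pkSome (U V : finType) (i : U -> V) v u : pk i v = Some u -> i u = v.
Proof. rewrite /pk; case: pickP => [u' /eqP <- [->] //|//]. Qed.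

Lemma pkNone (U V : finType) (i : U -> V) v : pk i v = None -> forall u, i u != v.
Proof. rewrite /pk; case: pickP => [//|H] _ u; exact: (negbT (H u)). Qed.

Lemma pkNoneI (U V : finType) (i : U -> V) v : (forall u, i u != v) -> pk i v = None.
Proof. rewrite /pk; case: pickP => [u /eqP E /(_ u)|//]; by rewrite E eqxx. Qed.

Lemma pk_i (U V : finType) (i : U -> V) u : exists u', pk i (i u) = Some u'.
Proof. rewrite /pk; case: pickP => [u' _|/(_ u)]; [by exists u' | by rewrite eqxx]. Qed.

Lemma elim_lemma (A C : K) (U V : finType) (i : U -> V) (pi : V -> U) (p : V -> V)
  (depth : V -> nat) (S : hom (prod (pow A #|V|) C) (pow A #|V|)) :
  (forall u, pi (i u) = u) ->
  (forall v, pk i v = None -> prj A v ⊙ S = prj A (p v) ⊙ p1 _ C) ->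
  (forall v, pk i v = None -> pi v = pi (p v)) ->
  (forall v, pk i v = None -> pk i (p v) = None -> depth (p v) < depth v) ->
  dagger S = rix A pi ⊙ dagger (rix A i ⊙ S ⊙ pmap (rix A pi) (idm C)).
Proof.
move=> Hpi HS Hpp Hd.
set P := prod (pow A #|U|) C.
have ET := @dagger_retract K _ _ C _ _ S (sig_tau A i).
have -> : dagger S = p2 _ _ ⊙ (tau_s A i ⊙ dagger S) by rewrite compA /tau_s p2_pair comp1m.
rewrite -ET bekic' p2_pair.
set T := tau_s A i ⊙ S ⊙ pmap (sig_s A i) (idm C).
set h := p2 _ _ ⊙ T ⊙ alphaY _ _ _.
pose M := \max_v depth v.
pose E v := match pk i v with
            | Some _ => prj A v ⊙ S ⊙ pmap (rix A pi) (idm C)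
            | None => prj A (pi v) ⊙ p1 _ C end.
have Hs (k : hom (prod (pow A #|V|) P) (pow A #|V|)) :
    (forall v, pk i v = None -> prj A v ⊙ k = prj A (pi v) ⊙ p1 _ C ⊙ p2 _ P) ->
    sig_s A i ⊙ pair (p1 _ C ⊙ p2 _ P) k = rix A pi ⊙ p1 _ C ⊙ p2 _ P.
  move=> Hk; apply: tup_ext => v; rewrite compA prj_tup !compA prj_rix.
  case Ev: (pk i v) => [u|].
    by move/pkSome: Ev => Ev; subst v; rewrite Hpi -compA p1_pair compA.
  by rewrite -compA p2_pair Hk.
have GYE : dagger h = tup E.
  apply: (@nilp A P V h (fun v => if pk i v is Some _ then M.+1 else depth v)) => v k IH.
  have Eh : h ⊙ pair k (p2 _ P) =
            S ⊙ pair (sig_s A i ⊙ pair (p1 _ C ⊙ p2 _ P) k) (p2 _ C ⊙ p2 _ P).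
    by rewrite /h /T /tau_s /alphaY; simp.
  rewrite Eh /E; case Ev: (pk i v) => [u|].
    have IH' : forall v', pk i v' = None -> prj A v' ⊙ k = prj A (pi v') ⊙ p1 _ C ⊙ p2 _ P.
      move=> v' Ev'; rewrite IH /E Ev' //.
      by rewrite Ev ltnS; apply: leq_bigmax.
    by rewrite (Hs k IH'); simp.
  rewrite compA (HS v Ev) -compA p1_pair compA prj_tup.
  case Epv: (pk i (p v)) => [u|].
    by rewrite -compA p1_pair (Hpp v Ev) -(pkSome Epv) Hpi compA.
  rewrite -compA p2_pair IH; first by rewrite /E Epv (Hpp v Ev).
  by rewrite Epv Ev Hd.
rewrite GYE.
have Esig : sig_s A i ⊙ pair (p1 _ C) (tup E) = rix A pi ⊙ p1 _ C.
  apply: tup_ext => v; rewrite compA prj_tup compA prj_rix.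
  case Ev: (pk i v) => [u|].
    by rewrite -compA p1_pair -(pkSome Ev) Hpi.
  by rewrite -compA p2_pair prj_tup /E Ev.
have Ea : dagger (p1 _ _ ⊙ T ⊙ pair (pair (p1 _ C) (tup E)) (p2 _ C)) =
          dagger (rix A i ⊙ S ⊙ pmap (rix A pi) (idm C)).
  congr dagger; rewrite /T /tau_s; simp; rewrite Esig; simp; done.
rewrite Ea; set a := dagger _.
apply: tup_ext => v; rewrite compA prj_tup compA prj_rix /E.
case Ev: (pk i v) => [u|]; last by rewrite -compA p1_pair.
rewrite -(pkSome Ev) Hpi {2}/a fixpt -/a.
by rewrite !compA prj_rix.
Qed.

End Systems.

Section Automata.
Variable K : ConwayCat.
Local Notation "f ⊙ g" := (@comp (ccat K) _ _ _ f g) (at level 40, left associativity).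

Definition dg (A : K) (V : finType) : hom A (pow A #|V|) := tup (fun _ : V => idm A).

Definition sysQ (Q : automaton) (A C : K) (f : hom (prod (pow A #|input Q|) C) A) :
  hom (prod (pow A #|state Q|) C) (pow A #|state Q|) :=
  tup (fun q : state Q => f ⊙ pmap (tup (fun a : input Q => prj A (act q a))) (idm C)).

Definition GammaT (Q : automaton) : Prop :=
  forall (A C : K) (f : hom (prod (pow A #|input Q|) C) A),
    dagger (sysQ f) = dg A (state Q) ⊙ dagger (f ⊙ pmap (dg A (input Q)) (idm C)).

Lemma GammaTE Q : Gamma K Q <-> GammaT Q.
Proof. by []. Qed.

Lemma dg_comp (A : K) (U V : finType) (f : U -> V) : rix A f ⊙ dg A V = dg A U.
Proof. by apply: tup_ext => u; rewrite compA !prj_tup. Qed.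

Lemma prj_dg (A : K) (V : finType) (v : V) : prj A v ⊙ dg A V = idm A.
Proof. by rewrite prj_tup. Qed.

Lemma GB (Q : automaton) (HQ : GammaT Q) (L : finType) (A C : K)
  (Phi : hom (prod (pow (pow A #|L|) #|input Q|) C) (pow A #|L|)) :
  dagger (tup (fun v : state Q * L => prj A v.2 ⊙ Phi ⊙
             pmap (tup (fun a : input Q => tup (fun l' : L => prj A (act v.1 a, l')))) (idm C)))
  = tup (fun v : state Q * L => prj A v.2) ⊙ dagger (Phi ⊙ pmap (dg (pow A #|L|) (input Q)) (idm C)).
Proof.
set B := pow A #|L|.
pose s := tup (fun q : state Q => tup (fun l : L => prj A (q, l))).
pose t := tup (fun v : state Q * L => prj A v.2 ⊙ prj B v.1).
have st : s ⊙ t = idm _.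
  apply: tup_ext => q; rewrite compA prj_tup compm1 tup_comp.
  by apply: tup_ext => l; rewrite !prj_tup.
have -> : tup (fun v : state Q * L => prj A v.2 ⊙ Phi ⊙
             pmap (tup (fun a : input Q => tup (fun l' : L => prj A (act v.1 a, l')))) (idm C))
          = t ⊙ sysQ Phi ⊙ pmap s (idm C).
  apply: tup_ext => -[q l]; rewrite prj_tup !compA prj_tup /=.
  rewrite -[prj A l ⊙ prj B q ⊙ _]compA /sysQ prj_tup -!compA pmap_comp comp1m tup_comp.
  by do 2 congr (_ ⊙ _); congr pmap; apply: tup_eq => a; rewrite prj_tup.
rewrite (dagger_retract _ st) HQ compA.
by congr (_ ⊙ _); apply: tup_ext => v; rewrite compA !prj_tup -compA prj_dg compm1.
Qed.


Lemma gamma_sub (Q Q' : automaton) (i : state Q' -> state Q) (lam : input Q' -> input Q) :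
  injective i -> (forall q a, i (act q a) = act (i q) (lam a)) -> GammaT Q -> GammaT Q'.
Proof.
move=> inj Hc HQ A C f.
pose F := f ⊙ pmap (rix A lam) (idm C).
have H1 : rix A i ⊙ sysQ F = sysQ f ⊙ pmap (rix A i) (idm C).
  apply: tup_ext => q'; rewrite compA prj_rix /sysQ prj_tup compA prj_tup /F.
  rewrite -!compA !pmap_comp comp1m; congr (_ ⊙ pmap _ _).
  by apply: tup_ext => a'; rewrite !compA (prj_rix A lam a') !prj_tup Hc.
rewrite -(closed_sub inj H1) HQ compA dg_comp /F -compA pmap_comp comp1m.
by rewrite /rix tup_comp; congr (_ ⊙ dagger (_ ⊙ pmap _ _)); apply: tup_ext => a; rewrite !prj_tup.
Qed.

Definition prodA (Q : automaton) (S2 : finType) (act2 : S2 -> input Q -> S2) : automaton :=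
  @Automaton (state Q * S2)%type (input Q) (fun p a => (act p.1 a, act2 p.2 a)).

Lemma gamma_prod (Q : automaton) (S2 : finType) (act2 : S2 -> input Q -> S2) :
  GammaT Q -> GammaT (@Automaton S2 (input Q) act2) -> GammaT (prodA act2).
Proof.
move=> HQ HL A C f.
set B := pow A #|S2|.
pose Phi := tup (fun l : S2 => f ⊙ pmap (tup (fun a : input Q => prj A (act2 l a) ⊙ prj B a)) (idm C)).
have E1 : sysQ (Q := prodA act2) f =
  tup (fun v : state Q * S2 => prj A v.2 ⊙ Phi ⊙
             pmap (tup (fun a : input Q => tup (fun l' : S2 => prj A (act v.1 a, l')))) (idm C)).
  apply: tup_eq => -[q l] /=; rewrite /Phi prj_tup -compA pmap_comp comp1m tup_comp.
  by congr (_ ⊙ pmap _ _); apply: tup_eq => a; rewrite -compA prj_tup prj_tup.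
rewrite E1 (GB HQ).
have E2 : Phi ⊙ pmap (dg B (input Q)) (idm C) = sysQ (Q := @Automaton S2 (input Q) act2) f.
  rewrite /Phi tup_comp; apply: tup_eq => l; rewrite -compA pmap_comp comp1m tup_comp.
  by congr (_ ⊙ pmap _ _); apply: tup_eq => a; rewrite -compA prj_dg compm1.
rewrite E2 HL compA; congr (_ ⊙ _).
by apply: tup_ext => v; rewrite compA !prj_tup.
Qed.

Lemma dagger_unit (A C : K) (S : hom (prod (pow A #|{: unit}|) C) (pow A #|{: unit}|)) :
  prj A tt ⊙ dagger S = dagger (prj A tt ⊙ S ⊙ pmap (dg A unit) (idm C)).
Proof.
have st : dg A unit ⊙ prj A tt = idm _.
  by apply: tup_ext => -[]; rewrite compA prj_dg comp1m compm1.
by rewrite (dagger_retract _ st).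
Qed.

Lemma dagger_single (A C : K) (U0 : finType) (u0 : U0) (Hu : forall u, u = u0)
  (S : hom (prod (pow A #|U0|) C) (pow A #|U0|)) :
  prj A u0 ⊙ dagger S = dagger (prj A u0 ⊙ S ⊙ pmap (dg A U0) (idm C)).
Proof.
have st : dg A U0 ⊙ prj A u0 = idm _.
  by apply: tup_ext => u; rewrite (Hu u) compA prj_dg comp1m compm1.
by rewrite (dagger_retract _ st).
Qed.

Lemma dagger_compw (A C : K) (L : finType) (g : hom (prod A C) A) :
  dagger (tup (fun l : L => g ⊙ pmap (prj A l) (idm C))) = dg A L ⊙ dagger g.
Proof.
apply: tup_ext => l; rewrite compA prj_dg comp1m.
pose i := fun _ : unit => l.
have inj : injective i by move=> [] [].
have H : rix A i ⊙ tup (fun l : L => g ⊙ pmap (prj A l) (idm C)) =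
         tup (fun _ : unit => g ⊙ pmap (prj A tt) (idm C)) ⊙ pmap (rix A i) (idm C).
  apply: tup_ext => u; rewrite compA prj_rix prj_tup compA prj_tup -compA pmap_comp comp1m.
  by rewrite prj_rix.
have -> : prj A l = prj A tt ⊙ rix A i by rewrite prj_rix.
rewrite -compA (closed_sub inj H) dagger_unit prj_tup -compA pmap_comp comp1m prj_dg.
by rewrite pmap11 compm1.
Qed.

End Automata.

Section Words.
Variable K : ConwayCat.
Local Notation "f ⊙ g" := (@comp (ccat K) _ _ _ f g) (at level 40, left associativity).
Variables (Q : automaton) (I : finType) (w : I -> seq (input Q)) (a0 : input Q).
Hypothesis Hw : forall i, 0 < size (w i).

Definition QW : automaton := @Automaton (state Q) I (fun q i => foldl (@act Q) q (w i)).

Let N := \max_i size (w i).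
Let L : finType := option (I * 'I_N.+1).

Lemma size_w_N i : size (w i) <= N.
Proof. exact: (leq_bigmax (F := fun i => size (w i)) i). Qed.

Definition nx (i : I) (j : nat) : L := if j < size (w i) then Some (i, inord j) else None.

Definition piW (v : state Q * L) : state Q :=
  match v.2 with
  | None => v.1
  | Some (i, k) => if k < size (w i) then foldl (@act Q) v.1 (drop k (w i)) else act v.1 a0
  end.

Lemma piW_nx q i j : j <= size (w i) -> piW (q, nx i j) = foldl (@act Q) q (drop j (w i)).
Proof.
move=> Hj; rewrite /nx /piW /=; case: ltnP => H /=.
  by rewrite inordK ?H // ltnS (leq_trans (ltnW H)) ?size_w_N.
have -> : j = size (w i) by apply/eqP; rewrite eqn_leq Hj H.
by rewrite drop_size.
Qed.

Definition pW (v : state Q * L) : state Q * L :=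
  match v.2 with
  | None => v
  | Some (i, k) => (act v.1 (nth a0 (w i) k), nx i k.+1)
  end.

Definition depthW (v : state Q * L) : nat :=
  match v.2 with None => 0 | Some (i, k) => size (w i) - k end.

Lemma piW_pW v : v.2 != None -> piW v = piW (pW v).
Proof.
case: v => q [[i k]|] //= _; rewrite {1}/piW /pW /=.
case: ltnP => Hk.
  by rewrite piW_nx // (drop_nth a0 Hk).
by rewrite nth_default // /nx ltnNge (leq_trans Hk (leqnSn k)).
Qed.


Lemma gamma_words : GammaT K Q -> GammaT K QW.
Proof.
move=> HQ A C f.
set B := pow A #|L|.
pose Phi : hom (prod (pow B #|input Q|) C) B := tup (fun l : L => match l with
   | None => f ⊙ pmap (tup (fun i : I => prj A (nx i 1) ⊙ prj B (nth a0 (w i) 0))) (idm C)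
   | Some (i, k) => prj A (nx i k.+1) ⊙ prj B (nth a0 (w i) k) ⊙ p1 _ C end).
set S := tup (fun v : state Q * L => prj A v.2 ⊙ Phi ⊙
             pmap (tup (fun a : input Q => tup (fun l' : L => prj A (act v.1 a, l')))) (idm C)).
have HGB := GB HQ Phi; rewrite -/S in HGB.
pose i0 := fun q : state Q => (q, @None (I * 'I_N.+1)).
have Hnone : forall v : state Q * L, pk i0 v = None -> v.2 <> None.
  move=> [q l] /= Hv El; rewrite El in Hv.
  by have [u' Eu] := pk_i i0 q; rewrite /i0 Hv in Eu.
have Hdep : forall v : state Q * L, pk i0 v = None -> pk i0 (pW v) = None -> depthW (pW v) < depthW v.
  move=> [q [[i k]|]] Hv Hpv; last by case: (Hnone _ Hv).
  have := Hnone _ Hpv; rewrite /pW /depthW /nx /=.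
  case: ltnP => Hk Hne; last by case: Hne.
  have Hk' : k.+1 < N.+1 := leq_trans Hk (leq_trans (size_w_N i) (leqnSn N)).
  rewrite /= (inordK Hk'); exact: ltn_sub2l (ltnW Hk) (ltnSn k).
have HEL := @elim_lemma K A C _ _ i0 piW pW depthW S (fun _ => erefl) _ _ Hdep.
rewrite HEL in HGB; clear HEL.
- have ES : rix A i0 ⊙ S ⊙ pmap (rix A piW) (idm C) = sysQ (Q := QW) f.
    apply: tup_ext => q; rewrite !compA prj_rix /S prj_tup /= /Phi prj_tup.
    rewrite -!compA !pmap_comp !comp1m /sysQ prj_tup; congr (_ ⊙ pmap _ _).
    apply: tup_ext => i; rewrite compA prj_tup -compA (compA (prj B _)) prj_tup compA prj_tup.
    have Ew : foldl (@act Q) q (w i) = foldl (@act Q) (act q (nth a0 (w i) 0)) (drop 1 (w i)).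
      by rewrite -{1}(drop0 (w i)) (drop_nth a0 (Hw i)).
    by rewrite prj_rix piW_nx ?Hw // prj_tup /= Ew.
  have Eid : rix A i0 ⊙ rix A piW = idm _.
    by apply: tup_ext => u; rewrite compA prj_rix prj_rix compm1.
  have -> : dagger (sysQ (Q := QW) f) = rix A i0 ⊙ (rix A piW ⊙ dagger (sysQ (Q := QW) f)).
    by rewrite compA Eid comp1m.
  rewrite -ES HGB compA.
  have -> : rix A i0 ⊙ tup (fun v : state Q * L => prj A v.2) = dg A (state QW) ⊙ prj A (None : L).
    by apply: tup_ext => q; rewrite compA prj_rix prj_tup compA prj_dg comp1m.
  rewrite -compA; congr (_ ⊙ _).
  pose i1 := fun _ : unit => (None : L).
  pose pp := fun l : L => match l with None => None | Some (i, k) => nx i k.+1 end.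
  pose d1 := fun l : L => match l with None => 0 | Some (i, k) => size (w i) - k end.
  have Hn1 : forall l : L, pk i1 l = None -> l <> None.
    move=> l Hv El; rewrite El in Hv.
    by have [u' Eu] := pk_i i1 tt; rewrite /i1 Hv in Eu.
  have Hd1 : forall l : L, pk i1 l = None -> pk i1 (pp l) = None -> d1 (pp l) < d1 l.
    move=> [[i k]|] Hv Hpv; last by case: (Hn1 _ Hv).
    have := Hn1 _ Hpv; rewrite /pp /d1 /nx /=.
    case: ltnP => Hk Hne; last by case: Hne.
    have Hk' : k.+1 < N.+1 := leq_trans Hk (leq_trans (size_w_N i) (leqnSn N)).
    rewrite /= (inordK Hk'); exact: ltn_sub2l (ltnW Hk) (ltnSn k).
  have HS1 : forall l : L, pk i1 l = None ->
      prj A l ⊙ (Phi ⊙ pmap (dg B (input Q)) (idm C)) = prj A (pp l) ⊙ p1 _ C.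
    move=> [[i k]|] Hv; last by case: (Hn1 _ Hv).
    rewrite compA /Phi prj_tup -!compA p1_pmap (compA (prj B _)) prj_dg comp1m.
    by [].
  rewrite (@elim_lemma K A C _ _ i1 (fun _ => tt) pp d1 _ (fun u => match u with tt => erefl end)
             HS1 (fun _ _ => erefl) Hd1).
  rewrite (compA (prj A None)) prj_rix (dagger_single (u0 := tt)); last by case.
  congr dagger; rewrite -!compA (compA (prj A tt)) prj_rix /i1 (compA (prj A _)) /Phi prj_tup.
  rewrite -!compA !pmap_comp !comp1m; congr (_ ⊙ pmap _ _).
  rewrite dg_comp tup_comp; apply: tup_ext => i; rewrite !prj_tup.
  by rewrite -compA (compA (prj B _)) prj_dg comp1m prj_dg.
- move=> [q [[i k]|]] Hv; last by case: (Hnone _ Hv).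
  rewrite /S prj_tup /= /Phi (@prj_tup _ A _ L) -!compA p1_pmap (compA (prj B _)) prj_tup compA prj_tup.
  by [].
- move=> v Hv; exact: piW_pW (introN eqP (Hnone v Hv)).
Qed.

End Words.

Section Twist.
Variable K : ConwayCat.
Local Notation "f ⊙ g" := (@comp (ccat K) _ _ _ f g) (at level 40, left associativity).

Lemma gamma_twist (X : finType) (mul : X -> X -> X) (G : finGroupType) (phi : X -> G)
  (x0 : X) (s : G -> X) :
  (forall x y, phi (mul x y) = (phi x * phi y)%g) -> (forall g, phi (s g) = g) ->
  GammaT K (@Automaton X X mul) -> GammaT K (group_automaton G).
Proof.
move=> Hm Hs HH A C f.
set B := pow A #|G|.
pose Phi1 : hom (prod (pow B #|X|) C) B :=
  tup (fun g : G => f ⊙ pmap (tup (fun g' : G => prj A (g * g')%g ⊙ prj B (s g'))) (idm C)).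
pose Phi2 : hom (prod (pow B #|X|) C) B :=
  tup (fun k : G => f ⊙ pmap (tup (fun g' : G => prj A k ⊙ prj B (s g'))) (idm C)).
have G1 := GB HH Phi1; have G2 := GB HH Phi2.
set S1 := tup _ in G1; set S2 := tup _ in G2.
have E1 : Phi1 ⊙ pmap (dg B (input (@Automaton X X mul))) (idm C) = sysQ (Q := group_automaton G) f.
  rewrite /Phi1 tup_comp; apply: tup_eq => g; rewrite -compA pmap_comp comp1m tup_comp.
  by congr (_ ⊙ pmap _ _); apply: tup_eq => g'; rewrite -compA prj_dg compm1.
have E2 : Phi2 ⊙ pmap (dg B (input (@Automaton X X mul))) (idm C) =
          tup (fun k : G => (f ⊙ pmap (dg A G) (idm C)) ⊙ pmap (prj A k) (idm C)).
  rewrite /Phi2 tup_comp; apply: tup_eq => k; rewrite -!compA !pmap_comp !comp1m.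
  congr (_ ⊙ pmap _ _); rewrite !tup_comp; apply: tup_eq => g'.
  by rewrite -compA prj_dg compm1 comp1m.
rewrite E1 in G1; rewrite E2 dagger_compw in G2.
pose r := fun v : X * G => (v.1, (v.2 * phi v.1)%g).
pose r' := fun v : X * G => (v.1, (v.2 * (phi v.1)^-1)%g).
have st : rix A r ⊙ rix A r' = idm _.
  apply: tup_ext => v; rewrite compA !prj_rix compm1 /r /r' /=.
  by rewrite -mulgA mulgV mulg1 -surjective_pairing.
have ES : S1 = rix A r' ⊙ S2 ⊙ pmap (rix A r) (idm C).
  apply: tup_ext => -[h g]; rewrite /S1 /S2 prj_tup !compA prj_rix prj_tup /=.
  rewrite /Phi1 /Phi2 !prj_tup -!compA !pmap_comp !comp1m; congr (_ ⊙ pmap _ _).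
  rewrite !tup_comp; apply: tup_eq => g'.
  rewrite -!compA !prj_tup /= !compA !prj_tup.
  by rewrite /r /= Hm Hs mulgA mulgKV.
have E3 : dagger S1 = rix A r' ⊙ (tup (fun v : X * G => prj A v.2) ⊙
                        (dg A G ⊙ dagger (f ⊙ pmap (dg A G) (idm C)))).
  by rewrite ES (dagger_retract _ st) G2.
apply: tup_ext => g; rewrite compA prj_dg comp1m.
have := congr1 (fun h => prj A (x0, g) ⊙ h) G1; rewrite /= compA prj_tup /= => <-.
rewrite E3 (compA (prj A _)) prj_rix (compA (prj A _)) prj_tup /= compA prj_dg comp1m //.
Qed.

End Twist.

Section Main.
Variable K : ConwayCat.

Definition Pk (Q : automaton) (k : nat) : automaton :=
  @Automaton {ffun 'I_k -> state Q} (input Q) (fun m a => [ffun j => act (m j) a]).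

Lemma gamma_Pk (Q : automaton) k : GammaT K Q -> GammaT K (Pk Q k.+1).
Proof.
move=> HQ; elim: k => [|k IH].
  apply: (@gamma_sub K Q (Pk Q 1) (fun m => m ord0) id) => //.
    move=> m m' E; apply/ffunP => j; by rewrite (ord1 j).
  by move=> m a /=; rewrite ffunE.
have HP := gamma_prod HQ IH.
apply: (@gamma_sub K (@prodA Q _ (@act (Pk Q k.+1))) (Pk Q k.+2) (fun m => (m ord0, [ffun j => m (lift ord0 j)])) id) => //.
  move=> m m' [E1 /ffunP E2]; apply/ffunP => j.
  case: (unliftP ord0 j) => [j' ->|->] //; by have := E2 j'; rewrite !ffunE.
by move=> m a /=; rewrite !ffunE; congr (_, _); apply/ffunP => j; rewrite !ffunE.
Qed.

Lemma foldl_Pk (Q : automaton) k (m : {ffun 'I_k -> state Q}) (u : seq (input Q)) :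
  foldl (@act (Pk Q k)) m u = [ffun j => foldl (@act Q) (m j) u].
Proof.
elim: u m => [|a u IH] m /=; first by apply/ffunP => j; rewrite ffunE.
by rewrite IH; apply/ffunP => j; rewrite !ffunE.
Qed.

End Main.

Lemma word_fun_cat (Q : automaton) (u v : seq (input Q)) :
  word_fun (u ++ v) = mulT (word_fun u) (word_fun v).
Proof. by apply/ffunP => q; rewrite /mulT /word_fun !ffunE foldl_cat. Qed.

Lemma mulTA (Q : automaton) (a b c : {ffun state Q -> state Q}) :
  mulT a (mulT b c) = mulT (mulT a b) c.
Proof. by apply/ffunP => q; rewrite /mulT !ffunE. Qed.

Unset Implicit Arguments.

Theorem theorem3p2 (K : ConwayCat) (Q : automaton) :
  0 < #|state Q| -> 0 < #|input Q| ->
  Gamma K Q ->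
  forall G : finGroupType, simple [set: G] -> divides_M Q G ->
    Gamma K (group_automaton G).
Proof.
move=> Hn Hm HQ G Hsimp [H [e [phi [[HinM He Hcl Hunit Hinv] Hhom Hsurj]]]].
have HQT : GammaT K Q := HQ.
pose X := ({x : {ffun state Q -> state Q} | x \in H} : finType).
pose mulX (x y : X) : X := exist (fun x => x \in H) (mulT (val x) (val y)) (Hcl _ _ (valP x) (valP y)).
pose phiX (x : X) := phi (val x).
pose x0 : X := exist (fun x => x \in H) e He.
have HhomX x y : phiX (mulX x y) = (phiX x * phiX y)%g := Hhom _ _ (valP x) (valP y).
pose s (g : G) : X := odflt x0 [pick x : X | phiX x == g].
have Hs g : phiX (s g) = g.
  rewrite /s; case: pickP => [x /eqP //|Hn0].
  have [x Hx Ex] := Hsurj g; have := Hn0 (exist (fun x => x \in H) x Hx); by rewrite /phiX /= Ex eqxx.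
suff HX : GammaT K (@Automaton X X mulX).
  exact: (gamma_twist x0 HhomX Hs HX).
have Hex (x : X) : exists u, val x == word_fun u.
  by have [u Eu] := HinM _ (valP x); exists u; rewrite Eu.
pose wd (x : X) := xchoose (Hex x).
have Hwd x : val x = word_fun (wd x) by apply/eqP; exact: (xchooseP (Hex x)).
have He1 : phiX x0 = 1%g.
  have E : phiX (mulX x0 x0) = phiX x0.
    by rewrite /phiX /= (proj1 (Hunit _ He)).
  by rewrite HhomX in E; apply: (mulgI (phiX x0)); rewrite E mulg1.
have [z Hz] : exists z : X, wd z != [::].
  case/simpleP: Hsimp => /trivgPn [g _ ng1] _.
  case Ew : (wd (s g)) => [|a u]; last by exists (s g); rewrite Ew.
  case Ew0 : (wd x0) => [|a u]; last by exists x0; rewrite Ew0.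
  have : s g = x0 by apply: val_inj; rewrite !Hwd Ew Ew0.
  by move/(congr1 phiX); rewrite Hs He1 => E; rewrite E eqxx in ng1.
have [zi Hzi [Ezi _]] := Hinv _ (valP z).
pose zI : X := exist (fun x => x \in H) zi Hzi.
pose w (x : X) := wd z ++ wd zI ++ wd x.
have Hw x : 0 < size (w x) by rewrite /w size_cat; case: (wd z) Hz.
have Hwf x : word_fun (w x) = val x.
  rewrite /w !word_fun_cat -!Hwd mulTA.
  have -> : mulT (val z) (val zI) = e by exact: Ezi.
  exact: (proj1 (Hunit _ (valP x))).
pose n := #|state Q|.
have HP : GammaT K (Pk Q n).
  by have := gamma_Pk (k := n.-1) HQT; rewrite prednK.
pose a0 : input Q := enum_val (Ordinal Hm).
have HW := gamma_words (K := K) (Q := Pk Q n) (w := w) a0 Hw HP.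
apply: (gamma_sub (Q := @QW (Pk Q n) X w) (Q' := @Automaton X X mulX)
          (i := fun x : X => [ffun j : 'I_n => val x (enum_val j)]) (lam := id) _ _ HW).
  move=> x y /ffunP E; apply: val_inj; apply/ffunP => q.
  by have := E (enum_rank q); rewrite !ffunE enum_rankK.
move=> x y /=; rewrite foldl_Pk; apply/ffunP => j; rewrite !ffunE.
change (val y (val x (enum_val j)) = foldl (@act Q) (val x (enum_val j)) (w y)).
by rewrite -(Hwf y) ffunE.
Qed.
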